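(* Let $N\ge 2$ and let $A=J-I$ be the adjacency matrix of the complete graph $K_N$ ($J$ the all-ones matrix). For integers $k\ge1$, $m\ge1$ define $$\mathcal A[k,m]=\sum_{\substack{j_1+\cdots+j_k=m\\ j_i\ge1}}\ \prod_{i=1}^k (A^{j_i})_{11}.$$ Then $\mathcal A[k,m]=0$ whenever $k>m/2$, and for $1\le k\le m/2$, $$\mathcal A[k,m]=(-1)^m(N-1)^k\sum_{r=0}^{m-2k}\binom{k+r-1}{r}\binom{m-k-r-1}{m-2k-r}(-1)^r(N-1)^r.$$ Moreover $\mathcal A[1,m]=\sum_{j=1}^{m-1}(-1)^{m-1-j}(N-1)^j$.
   Context: $(A^{j})_{11}$ is the number of closed walks of length $j$ starting and ending at node $1$. *)

(* Defs.v *)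
From mathcomp Require Import all_boot all_order all_algebra.
Set Implicit Arguments. Unset Strict Implicit. Unset Printing Implicit Defensive.
Import Order.TTheory GRing.Theory Num.Theory.
Local Open Scope ring_scope.

Definition adjK (N : nat) : 'M[int]_N := const_mx 1 - 1%:M.

(* Compositions are encoded as functions 'I_k -> 'I_m.+1 (each part <= m). *)
Definition calA (N : nat) (i1 : 'I_N) (k m : nat) : int :=
  \sum_(f : {ffun 'I_k -> 'I_m.+1} |
          [forall i, (0 < f i)%N] && (\sum_(i < k) (f i : nat) == m)%N)
     \prod_(i < k) (((adjK N) ^+ (f i)) i1 i1).

(* Main.v *)
Require Import Defs.
From mathcomp Require Import all_boot all_order all_algebra.
From mathcomp Require Import zify ring lra.
Import Order.TTheory GRing.Theory Num.Theory.
Local Open Scope ring_scope.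

Section S.
Variable (N' : nat).
Local Notation N := N'.+1.
Let n : int := N%:Z - 1.

Definition ys (t : nat) : int := \sum_(i < t.+1) n ^+ i * (-1) ^+ (t - i).
Definition xs (t : nat) : int := if t is t'.+1 then ys t' else 0.

Lemma ys0 : ys 0 = 1.
Proof. by rewrite /ys big_ord1 expr0 subnn expr0 mulr1. Qed.

Lemma ysS t : ys t.+1 = n * ys t + (-1) ^+ t.+1.
Proof.
rewrite /ys big_ord_recl /= expr0 mul1r subn0 addrC mulr_sumr; congr (_ + _).
by apply: eq_bigr => i _; rewrite /bump /= add1n subSS exprS mulrA.
Qed.

Definition Jm : 'M[int]_N := const_mx 1.

Lemma JJ : Jm * Jm = (N%:R : int) *: Jm.
Proof.
apply/matrixP => i j; rewrite !mxE.
under eq_bigr do rewrite !mxE mul1r.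
by rewrite sumr_const card_ord mulr1.
Qed.

Lemma adjK_pow j : adjK N ^+ j = xs j *: Jm + (-1) ^+ j *: 1.
Proof.
elim: j => [|j IH]; first by rewrite expr0 /xs scale0r add0r scale1r.
rewrite exprSr IH /adjK -/Jm.
rewrite mulrDl !mulrBr !mulr1 -!scalerAl JJ mul1r scalerA.
apply/matrixP => a b; rewrite !mxE.
clear IH; rewrite natz; case: j => [|j] /=; rewrite ?ys0 ?ysS /n. all: move: ((a == b)%:R : int) => e; rewrite ?exprS ?expr0; ring.
Qed.

Definition aa j := xs j + (-1) ^+ j.

Lemma adjK_pow_diag j (i : 'I_N) : (adjK N ^+ j) i i = aa j.
Proof. by rewrite adjK_pow !mxE eqxx /aa !mulr1. Qed.

End S.

Section Aa.
Variable (N' : nat).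
Local Notation N := N'.+1.
Let n : int := N%:Z - 1.

Lemma aa1 : aa N' 1 = 0.
Proof. by rewrite /aa /= ys0 expr1 subrr. Qed.

Lemma aaSS t : aa N' t.+2 = n * ys N' t.
Proof. rewrite /aa /= ysS !exprS; rewrite -/n; ring. Qed.

Lemma aaS t : aa N' t.+1 = \sum_(1 <= j < t.+1) (-1) ^+ (t - j) * n ^+ j.
Proof.
rewrite /aa /= /ys big_ord_recl /= expr0 mul1r subn0 exprS mulN1r addrAC subrr add0r.
rewrite -{1}[1%N]add0n big_addn subn1 /= big_mkord; apply: eq_bigr => i _; rewrite mulrC.
rewrite /bump /= add1n addn1; congr (_ * _); congr (_ ^+ _); lia.
Qed.
End Aa.

Definition eqlow (M : nat) (p q : {poly int}) := forall j, (j < M)%N -> p`_j = q`_j.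

Lemma eqlowM M p q p' q' : eqlow M p p' -> eqlow M q q' -> eqlow M (p * q) (p' * q').
Proof.
move=> hp hq j hj; rewrite !coefM; apply: eq_bigr => i _.
have hi := ltn_ord i.
rewrite hp ?hq //; lia.
Qed.

Lemma eqlowX M p q k : eqlow M p q -> eqlow M (p ^+ k) (q ^+ k).
Proof.
move=> h; elim: k => [|k IH]; first by move=> j _; rewrite !expr0.
by rewrite !exprS; apply: eqlowM.
Qed.

Lemma hockey c r : \sum_(i < r.+1) ('C(c + i, i))%:R = ('C(c.+1 + r, r))%:R :> int.
Proof.
elim: r => [|r IH]; first by rewrite big_ord1 !addn0 !bin0.
rewrite big_ord_recr /= IH -natrD; congr (_%:R).
rewrite (_ : (c.+1 + r.+1 = (c.+1 + r).+1)%N) ?addnS // binS addnC; congr (_ + _); congr (binomial _ _); lia.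
Qed.

Lemma powW (x : int) M c r : (r < M)%N ->
  ((\poly_(i < M) x ^+ i) ^+ c.+1)`_r = ('C(c + r, r))%:R * x ^+ r.
Proof.
elim: c r => [|c IH] r hr.
  by rewrite expr1 coef_poly hr add0n binn mul1r.
rewrite exprSr coefM.
rewrite (eq_bigr (fun i : 'I_r.+1 => ('C(c + i, i))%:R * x ^+ r)) => [|i _].
  by rewrite -mulr_suml hockey.
have hi := ltn_ord i.
rewrite IH ?coef_poly; last lia.
rewrite ifT; last lia.
rewrite -mulrA -exprD; congr (_ * _ ^+ _); lia.
Qed.

Lemma calA_coef N (i1 : 'I_N) k m :
  calA i1 k m = ((\poly_(j < m.+1) (if j == 0%N then 0 else (adjK N ^+ j) i1 i1)) ^+ k)`_m.
Proof.
set E := fun j : nat => if j == 0%N then 0 else (adjK N ^+ j) i1 i1.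
rewrite poly_def (_ : forall p : {poly int}, p ^+ k = \prod_(i < k) p); last by move=> p; rewrite prodr_const card_ord.
rewrite bigA_distr_bigA coef_sum /calA big_mkcond.
apply: eq_bigr => f _.
rewrite (eq_bigr (fun i => (E (f i))%:P * 'X^(f i))); last by move=> i _; rewrite mul_polyC.
rewrite big_split /= -rmorph_prod prodrXr coefCM coefXn.
case hs: (\sum_i (f i : nat) == m)%N; rewrite eq_sym hs ?andbF ?mulr0 //= mulr1 andbT.
case: ifP => [/forallP hall | /negbT hall].
  by apply: eq_bigr => i _; rewrite /E; have := hall i; case: (f i) => -[].
move: hall; rewrite negb_forall => /existsP [i0 hi0].
rewrite (bigD1 i0) //= /E; move: hi0; case: (f i0) => -[] //= _ _.
by rewrite mul0r.
Qed.

Lemma Qk_coef (n : int) m c :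
  ((n%:P * ((\poly_(i < m.+1) n ^+ i) * (\poly_(i < m.+1) (-1) ^+ i)) * 'X^2) ^+ c.+1)`_m
  = if (m < 2 * c.+1)%N then 0 else n ^+ c.+1 * \sum_(r < (m - 2 * c.+1).+1)
      (('C(c + r, r))%:R * n ^+ r * (('C(c + (m - 2 * c.+1 - r), m - 2 * c.+1 - r))%:R
          * (-1) ^+ (m - 2 * c.+1 - r))).
Proof.
rewrite !exprMn -rmorphXn /= -exprD addnn coefMXn coefCM -mul2n.
case: ifP => // hm; congr (_ * _); rewrite coefM; apply: eq_bigr => r _.
have hr := ltn_ord r.
rewrite !powW //; lia.
Qed.

Lemma PQ N' (i1 : 'I_N'.+1) m :
  let n : int := N'.+1%:Z - 1 in
  eqlow m.+1 (\poly_(j < m.+1) (if j == 0%N then 0 else (adjK N'.+1 ^+ j) i1 i1))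
     (n%:P * ((\poly_(i < m.+1) n ^+ i) * (\poly_(i < m.+1) (-1) ^+ i)) * 'X^2).
Proof.
move=> n j hj; rewrite coef_poly hj coefMXn.
case: j hj => [|[|t]] hj //=; rewrite adjK_pow_diag ?aa1 // aaSS.
rewrite subn2 /= coefCM coefM /ys; congr (_ * _); apply: eq_bigr => i _.
have hi := ltn_ord i.
rewrite !coef_poly !ifT //; lia.
Qed.

Theorem mainTheorem2 (N : nat) (hN : (2 <= N)%N) (i1 : 'I_N) (hi1 : nat_of_ord i1 = 0%N) :
  (forall k m : nat, (1 <= k)%N -> (1 <= m)%N -> (m < 2 * k)%N -> calA i1 k m = 0)
  /\
  (forall k m : nat, (1 <= k)%N -> (2 * k <= m)%N ->
     calA i1 k m =
       (-1) ^+ m * (N%:Z - 1) ^+ k *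
       \sum_(0 <= r < (m - 2 * k).+1)
          ('C(k + r - 1, r))%:Z * ('C(m - k - r - 1, m - 2 * k - r))%:Z
          * (-1) ^+ r * (N%:Z - 1) ^+ r)
  /\
  (forall m : nat, (1 <= m)%N ->
     calA i1 1 m = \sum_(1 <= j < m) (-1) ^+ (m - 1 - j) * (N%:Z - 1) ^+ j).
Proof.
case: N hN i1 hi1 => [|[|N']] // _ i1 _.
have key k m : calA i1 k m = (((N'.+2%:Z - 1)%:P * ((\poly_(i < m.+1) (N'.+2%:Z - 1) ^+ i)
    * (\poly_(i < m.+1) (-1) ^+ i)) * 'X^2) ^+ k)`_m.
  by rewrite calA_coef; exact: (eqlowX _ _ _ k (PQ _ i1 m) m (ltnSn m)).
split; [|split].
- case=> [|c] m // _ _ hm; by rewrite key Qk_coef hm.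
- case=> [|c] m // _ hm; rewrite key Qk_coef ifN -?leqNgt // big_mkord mulr_sumr mulr_sumr.
  apply: eq_bigr => r _; have hr := ltn_ord r.
  set s := (m - 2 * c.+1 - r)%N.
  rewrite (_ : (c.+1 + r - 1 = c + r)%N); last lia.
  rewrite (_ : (m - c.+1 - r - 1 = c + s)%N); last by rewrite /s; lia.
  have hs : (-1) ^+ s = (-1) ^+ m * (-1) ^+ r :> int.
    rewrite -exprD (_ : (m + r = s + 2 * (r + c.+1))%N); last by rewrite /s; lia.
    by rewrite exprD exprM expr2 mulrNN mulr1 expr1n mulr1.
  rewrite hs; ring.
- case=> [|t] // _.
  rewrite calA_coef expr1 coef_poly ltnSn /= adjK_pow_diag aaS.
  by apply: eq_bigr => j _; rewrite subn1.
Qed.
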